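(* Let $X$ be a real Banach space and let $g:X^*\to(-\infty,+\infty]$ be a proper convex weak$^*$-lower semicontinuous function. Let $\varepsilon>0$, $\beta\ge 0$, $x_0^*\in\operatorname{dom} g$, and $x_0\in\partial_\varepsilon g(x_0^* )\cap X$. Then there exist $x_\varepsilon^*\in\operatorname{dom} g$ and $x_\varepsilon\in X$ such that (i) $x_\varepsilon\in\partial g(x_\varepsilon^* )\cap X$; (ii) $\|x_\varepsilon^*-x_0^*\|\le\sqrt{\varepsilon}\,(1+\beta\|x_0^*\|)$; (iii) $|g(x_\varepsilon^* )-g(x_0^* )|\le\sqrt{\varepsilon}\,(\|x_0\|+\beta|\langle x_0^*,x_0\rangle|)+2\varepsilon$; (iv) $\|x_\varepsilon-x_0\|\le\sqrt{\varepsilon}$; (v) $|\langle x_\varepsilon,x^*\rangle-\langle x_0,x^*\rangle|\le\sqrt{\varepsilon}\,\|x^*\|$ for all $x^*\in X^*$; (vi) $x_0\in\partial_{2\varepsilon} g(x_\varepsilon^* )$; (vii) $|\langle x_\varepsilon-x_0,x_\varepsilon^*-x_0^*\rangle|\le\varepsilon$.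
   Context: $X^*$ is the dual of $X$, and $X$ is identified with its canonical image in $X^{**}$. $\operatorname{dom} g=\{x^*\in X^*: g(x^* )<+\infty\}$; ''proper'' means $g$ never takes the value $-\infty$ and $\operatorname{dom} g\neq\emptyset$. For $x^*\in\operatorname{dom} g$ and $\varepsilon\ge 0$, $\partial_\varepsilon g(x^* )=\{x^{**}\in X^{**}:\langle x^{**},y^*-x^*\rangle\le g(y^* )-g(x^* )+\varepsilon\ \text{for all } y^*\in X^*\}$, and $\partial g=\partial_0 g$; so $\partial_\varepsilon g(x^* )\cap X=\{x\in X:\langle y^*-x^*,x\rangle\le g(y^* )-g(x^* )+\varepsilon\ \forall y^*\in X^*\}$. *)

(* Defs.v *)
From Stdlib Require Import Reals Lra Psatz List.
Open Scope R_scope.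

Record NormedSpace := {
  ncarrier :> Type;
  nzero : ncarrier;
  nadd : ncarrier -> ncarrier -> ncarrier;
  nopp : ncarrier -> ncarrier;
  nscal : R -> ncarrier -> ncarrier;
  nnorm : ncarrier -> R;
  nadd_assoc : forall x y z, nadd x (nadd y z) = nadd (nadd x y) z;
  nadd_comm : forall x y, nadd x y = nadd y x;
  nadd_zero : forall x, nadd x nzero = x;
  nadd_opp : forall x, nadd x (nopp x) = nzero;
  nscal_assoc : forall a b x, nscal a (nscal b x) = nscal (a * b) x;
  nscal_one : forall x, nscal 1 x = x;
  nscal_distr_v : forall a x y, nscal a (nadd x y) = nadd (nscal a x) (nscal a y);
  nscal_distr_s : forall a b x, nscal (a + b) x = nadd (nscal a x) (nscal b x);
  nnorm_nonneg : forall x, 0 <= nnorm x;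
  nnorm_zero : nnorm nzero = 0;
  nnorm_eq0 : forall x, nnorm x = 0 -> x = nzero;
  nnorm_scal : forall a x, nnorm (nscal a x) = Rabs a * nnorm x;
  nnorm_triangle : forall x y, nnorm (nadd x y) <= nnorm x + nnorm y
}.

Arguments nzero {_}. Arguments nadd {_}. Arguments nopp {_}.
Arguments nscal {_}. Arguments nnorm {_}.

Definition vsub {X : NormedSpace} (x y : X) : X := nadd x (nopp y).

Definition complete (X : NormedSpace) : Prop :=
  forall u : nat -> X,
    (forall e, 0 < e -> exists N, forall m n, (N <= m)%nat -> (N <= n)%nat ->
        nnorm (vsub (u m) (u n)) < e) ->
    exists l : X, forall e, 0 < e -> exists N, forall n, (N <= n)%nat ->
        nnorm (vsub (u n) l) < e.

Record dual (X : NormedSpace) := {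
  dfun :> X -> R;
  dlin_add : forall x y, dfun (nadd x y) = dfun x + dfun y;
  dlin_scal : forall a x, dfun (nscal a x) = a * dfun x;
  dbounded : exists M, forall x, Rabs (dfun x) <= M * nnorm x
}.

Lemma dual_lin_add {X : NormedSpace} (a b : R) (f h : dual X) :
  forall x y, a * f (nadd x y) + b * h (nadd x y) =
              (a * f x + b * h x) + (a * f y + b * h y).
Proof. intros; rewrite !dlin_add; ring. Qed.

Lemma dual_lin_scal {X : NormedSpace} (a b : R) (f h : dual X) :
  forall c x, a * f (nscal c x) + b * h (nscal c x) = c * (a * f x + b * h x).
Proof. intros; rewrite !dlin_scal; ring. Qed.

Lemma dual_lin_bounded {X : NormedSpace} (a b : R) (f h : dual X) :
  exists M, forall x, Rabs (a * f x + b * h x) <= M * nnorm x.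
Proof.
  destruct (dbounded _ f) as [M1 H1]; destruct (dbounded _ h) as [M2 H2].
  exists (Rabs a * M1 + Rabs b * M2); intro x.
  eapply Rle_trans; [apply Rabs_triang|]. rewrite !Rabs_mult.
  specialize (H1 x); specialize (H2 x).
  assert (Rabs a * Rabs (f x) <= Rabs a * (M1 * nnorm x))
    by (apply Rmult_le_compat_l; [apply Rabs_pos|exact H1]).
  assert (Rabs b * Rabs (h x) <= Rabs b * (M2 * nnorm x))
    by (apply Rmult_le_compat_l; [apply Rabs_pos|exact H2]).
  nra.
Qed.

Definition dual_lin {X : NormedSpace} (a b : R) (f h : dual X) : dual X :=
  {| dfun := fun x => a * f x + b * h x;
     dlin_add := dual_lin_add a b f h;
     dlin_scal := dual_lin_scal a b f h;
     dbounded := dual_lin_bounded a b f h |}.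

Definition dual_sub {X : NormedSpace} (f h : dual X) : dual X := dual_lin 1 (-1) f h.

Definition dn_set {X : NormedSpace} (f : dual X) (r : R) : Prop :=
  exists x : X, nnorm x <= 1 /\ r = Rabs (f x).

Lemma dn_bound {X : NormedSpace} (f : dual X) : bound (dn_set f).
Proof.
  destruct (dbounded _ f) as [M HM]. exists (Rmax M 0).
  intros r [x [Hx ->]]. specialize (HM x). pose proof (nnorm_nonneg X x).
  pose proof (Rmax_l M 0). pose proof (Rmax_r M 0). nra.
Qed.

Lemma dn_ne {X : NormedSpace} (f : dual X) : exists r, dn_set f r.
Proof. exists (Rabs (f nzero)), nzero. rewrite nnorm_zero. split; [lra|reflexivity]. Qed.

Definition dual_norm {X : NormedSpace} (f : dual X) : R :=
  proj1_sig (completeness (dn_set f) (dn_bound f) (dn_ne f)).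

Inductive ER := Fin (r : R) | PInf.

Definition ER_le (a b : ER) : Prop :=
  match a, b with
  | _, PInf => True
  | PInf, Fin _ => False
  | Fin x, Fin y => x <= y
  end.

Definition fval (a : ER) : R := match a with Fin r => r | PInf => 0 end.

Definition in_dom {X : NormedSpace} (g : dual X -> ER) (xs : dual X) : Prop :=
  g xs <> PInf.

(* proper: never -oo (built into ER) and nonempty domain *)
Definition proper {X : NormedSpace} (g : dual X -> ER) : Prop :=
  exists xs, in_dom g xs.

Definition convex {X : NormedSpace} (g : dual X -> ER) : Prop :=
  forall (xs ys : dual X) (a b t : R), 0 < t < 1 ->
    g xs = Fin a -> g ys = Fin b ->
    ER_le (g (dual_lin t (1 - t) xs ys)) (Fin (t * a + (1 - t) * b)).

(* weak-star neighbourhood of xs: finitely many points of X and a radius *)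
Definition weak_star_lsc {X : NormedSpace} (g : dual X -> ER) : Prop :=
  forall (xs : dual X) (r : R), ~ ER_le (g xs) (Fin r) ->
    exists (l : list X) (d : R), 0 < d /\
      forall ys : dual X,
        (forall x, In x l -> Rabs (ys x - xs x) < d) -> ~ ER_le (g ys) (Fin r).

Definition eps_subdiff_X {X : NormedSpace} (g : dual X -> ER) (eps : R)
    (xs : dual X) (x : X) : Prop :=
  exists a, g xs = Fin a /\
    forall ys : dual X, ER_le (Fin (ys x - xs x + a - eps)) (g ys).

(* Main.v *)
Require Import Defs.
From Stdlib Require Import Reals Lra Psatz List Classical ClassicalEpsilon FunctionalExtensionality PropExtensionality.
Open Scope R_scope.

Record VS := mkVS {
  vc :> Type; v0 : vc; vadd : vc -> vc -> vc; vsc : R -> vc -> vc;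
  va_assoc : forall x y z, vadd x (vadd y z) = vadd (vadd x y) z;
  va_comm : forall x y, vadd x y = vadd y x;
  va_0 : forall x, vadd x v0 = x;
  vs_assoc : forall a b x, vsc a (vsc b x) = vsc (a*b) x;
  vs_1 : forall x, vsc 1 x = x;
  vs_dv : forall a x y, vsc a (vadd x y) = vadd (vsc a x) (vsc a y);
  vs_ds : forall a b x, vsc (a+b) x = vadd (vsc a x) (vsc b x);
  vs_0 : forall x, vsc 0 x = v0 }.
Arguments v0 {_}. Arguments vadd {_}. Arguments vsc {_}.
Arguments va_assoc {_}. Arguments va_comm {_}. Arguments va_0 {_}. Arguments vs_assoc {_}. Arguments vs_1 {_}. Arguments vs_dv {_}. Arguments vs_ds {_}. Arguments vs_0 {_}.

Section VSL.
Variable V : VS.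
Lemma vsc_0r a : vsc a (@v0 V) = v0.
Proof. rewrite <- (vs_0 (@v0 V)) at 1. rewrite vs_assoc. rewrite Rmult_0_r. apply vs_0. Qed.
Lemma va_0l (x : V) : vadd v0 x = x.
Proof. rewrite va_comm. apply va_0. Qed.
Lemma va_opp (x : V) : vadd x (vsc (-1) x) = v0.
Proof. rewrite <- (vs_1 x) at 1. rewrite <- vs_ds. replace (1 + -1) with 0 by ring. apply vs_0. Qed.
Lemma va_cancel (x y z : V) : vadd x z = vadd y z -> x = y.
Proof. intro H. assert (vadd (vadd x z) (vsc (-1) z) = vadd (vadd y z) (vsc (-1) z)) by (rewrite H; auto).
  rewrite <- !va_assoc, va_opp, !va_0 in H0. exact H0. Qed.
Definition lin (l : V -> R) := (forall x y, l (vadd x y) = l x + l y) /\ (forall a x, l (vsc a x) = a * l x).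
Lemma lin_0 l : lin l -> l v0 = 0.
Proof. intros [_ H]. rewrite <- (vs_0 (@v0 V)). rewrite H. ring. Qed.
End VSL.
Lemma sub_add_cancel (V : VS) (s s' w : V) : vadd (vadd s (vsc (-1) s')) (vadd s' w) = vadd s w.
Proof. rewrite <- va_assoc. f_equal. rewrite va_assoc, (va_comm (vsc (-1) s') s'), va_opp, va_0l. auto. Qed.

Inductive vexp := VA (n : nat) | VZ | VP (a b : vexp) | VSc (r : R) (a : vexp).
Section Norm.
Variable V : VS.
Fixpoint vden (env : list V) (e : vexp) : V :=
  match e with VA n => nth n env v0 | VZ => v0 | VP a b => vadd (vden env a) (vden env b)
  | VSc r a => vsc r (vden env a) end.
Fixpoint coef (e : vexp) (i : nat) : R :=
  match e with VA n => if Nat.eqb n i then 1 else 0 | VZ => 0 | VP a b => coef a i + coef b i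
  | VSc r a => r * coef a i end.
Fixpoint lc (env : list V) (c : nat -> R) : V :=
  match env with nil => v0 | x :: env' => vadd (vsc (c 0%nat) x) (lc env' (fun i => c (S i))) end.
Lemma lc_ext env c1 c2 : (forall i, c1 i = c2 i) -> lc env c1 = lc env c2.
Proof. intro h. f_equal. apply functional_extensionality; auto. Qed.
Lemma lc_add env : forall c1 c2, lc env (fun i => c1 i + c2 i) = vadd (lc env c1) (lc env c2).
Proof. induction env as [|x env IH]; intros; simpl. rewrite va_0; auto.
  rewrite IH, vs_ds. rewrite <- !va_assoc. f_equal. rewrite !va_assoc. f_equal. apply va_comm. Qed.
Lemma lc_sc env : forall r c, lc env (fun i => r * c i) = vsc r (lc env c).
Proof. induction env as [|x env IH]; intros; simpl. rewrite vsc_0r; auto.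
  rewrite IH, vs_dv, vs_assoc. auto. Qed.
Lemma lc_zero env : lc env (fun _ => 0) = v0.
Proof. induction env as [|x env IH]; simpl; auto. rewrite IH, vs_0, va_0; auto. Qed.
Lemma lc_atom env : forall n, lc env (fun i => if Nat.eqb n i then 1 else 0) = nth n env v0.
Proof. induction env as [|x env IH]; intros; simpl. destruct n; auto.
  destruct n as [|n]; simpl.
  - rewrite vs_1. rewrite lc_zero, va_0. auto.
  - rewrite vs_0, va_0l. apply IH. Qed.
Lemma vden_lc env e : vden env e = lc env (coef e).
Proof. induction e; simpl.
  - symmetry; apply lc_atom.
  - symmetry; apply lc_zero.
  - rewrite IHe1, IHe2, lc_add; auto.
  - rewrite IHe, lc_sc; auto. Qed.
Lemma vden_eq env e1 e2 : (forall i, coef e1 i = coef e2 i) -> vden env e1 = vden env e2.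
Proof. intro h. rewrite !vden_lc. apply lc_ext; auto. Qed.
End Norm.

Ltac inlist x l := match l with nil => constr:(false) | cons x _ => constr:(true)
  | cons _ ?l' => inlist x l' end.
Ltac collect t l := match t with
  | @vadd _ ?a ?b => let l1 := collect a l in collect b l1
  | @vsc _ _ ?a => collect a l
  | @v0 _ => l
  | _ => let b := inlist t l in match b with true => l | false => constr:(cons t l) end end.
Ltac idx x l := match l with cons x _ => constr:(0%nat) | cons _ ?l' => let n := idx x l' in constr:(S n) end.
Ltac reify env t := match t with
  | @vadd _ ?a ?b => let ea := reify env a in let eb := reify env b in constr:(VP ea eb)
  | @vsc _ ?r ?a => let ea := reify env a in constr:(VSc r ea)
  | @v0 _ => constr:(VZ)
  | _ => let n := idx t env in constr:(VA n) end.
Ltac getV t := match t with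
  | @vadd ?V _ _ => V | @vsc ?V _ _ => V | @v0 ?V => V end.
Ltac vring := match goal with |- ?a = ?b =>
  let V := match constr:((a, b)) with
     | (?a, _) => getV a | (_, ?b) => getV b end in
  let l0 := collect a (@nil (vc V)) in let l := collect b l0 in
  let l' := eval simpl in l in
  let ea := reify l' a in let eb := reify l' b in
  change (vden V l' ea = vden V l' eb); apply vden_eq;
  let i := fresh "i" in intro i; do 10 (destruct i as [|i]; [simpl; ring|]); simpl; ring end.



Section HBS.
Variable V : VS.
Variable p : V -> R.
Hypothesis Hsub : forall u w, p (vadd u w) <= p u + p w.
Hypothesis Hhom : forall c u, 0 < c -> p (vsc c u) = c * p u.

Definition Gr := V -> R -> Prop.
Definition gvalid (G : Gr) :=
  (forall v a b, G v a -> G v b -> a = b) /\ G v0 0 /\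
  (forall u a w b, G u a -> G w b -> G (vadd u w) (a+b)) /\
  (forall c u a, G u a -> G (vsc c u) (c*a)) /\
  (forall u a, G u a -> a <= p u).

Variable G0 : Gr.
Hypothesis HG0 : gvalid G0.

Definition incl (G H : Gr) := forall v a, G v a -> H v a.
Lemma incl_refl G : incl G G. Proof. intros v a h; exact h. Qed.
Lemma incl_trans G H K : incl G H -> incl H K -> incl G K.
Proof. intros h1 h2 v a h; auto. Qed.
Lemma incl_eq G H : incl G H -> incl H G -> G = H.
Proof. intros h1 h2. apply functional_extensionality; intro v.
  apply functional_extensionality; intro a. apply propositional_extensionality; split; auto. Qed.

Definition gsup (F : Gr -> Prop) : Gr := fun v a => G0 v a \/ exists G, F G /\ G v a.

Definition fnext (G : Gr) : Gr :=
  match excluded_middle_informative (exists H, gvalid H /\ incl G H /\ ~ incl H G) with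
  | left e => proj1_sig (constructive_indefinite_description _ e)
  | right _ => G end.

Lemma fnext_incl G : incl G (fnext G).
Proof. unfold fnext. destruct excluded_middle_informative as [e|n].
  - destruct (constructive_indefinite_description _ e) as [H [h1 [h2 h3]]]; simpl; auto.
  - apply incl_refl. Qed.
Lemma fnext_valid G : gvalid G -> gvalid (fnext G).
Proof. unfold fnext. destruct excluded_middle_informative as [e|n]; auto.
  destruct (constructive_indefinite_description _ e) as [H [h1 [h2 h3]]]; simpl; auto. Qed.
Lemma fnext_max G : incl (fnext G) G -> forall H, gvalid H -> incl G H -> incl H G.
Proof. unfold fnext. destruct excluded_middle_informative as [e|n].
  - destruct (constructive_indefinite_description _ e) as [H [h1 [h2 h3]]]; simpl. intro; contradiction.
  - intros _ H hv hi. apply NNPP. intro hn. apply n. exists H; auto. Qed.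

Inductive tower : Gr -> Prop :=
 | tw_next G : tower G -> tower (fnext G)
 | tw_sup F : (forall G, F G -> tower G) -> tower (gsup F).

Lemma tower_G0 G : tower G -> incl G0 G.
Proof. induction 1. - eapply incl_trans; eauto. apply fnext_incl. - intros v a h; left; auto. Qed.

Definition slt x c := incl x c /\ ~ incl c x.
Definition extreme c := forall x, tower x -> slt x c -> incl (fnext x) c.

Lemma Mc c : tower c -> extreme c -> forall x, tower x -> incl x c \/ incl (fnext c) x.
Proof. intros Tc Ec x Tx. induction Tx as [x Tx IH| F HF IH].
  - destruct IH as [h|h].
    + destruct (classic (incl c x)) as [h'|h'].
      * right. rewrite (incl_eq _ _ h h'). apply incl_refl.
      * left. apply Ec; auto. split; auto.
    + right. eapply incl_trans; eauto. apply fnext_incl.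
  - destruct (classic (exists G, F G /\ incl (fnext c) G)) as [[G [h1 h2]]|h].
    + right. intros v a hv. right. exists G; auto.
    + left. intros v a [hv|[G [h1 h2]]].
      * apply tower_G0; auto.
      * destruct (IH G h1) as [h3|h3]; auto. exfalso; apply h; eauto.
Qed.

Lemma all_extreme c : tower c -> extreme c.
Proof. induction 1 as [c Tc IH| F HF IH].
  - intros x Tx [h1 h2]. destruct (Mc c Tc IH x Tx) as [h|h].
    + destruct (classic (incl c x)) as [h'|h'].
      * rewrite (incl_eq _ _ h h'). apply incl_refl.
      * eapply incl_trans. apply IH; auto. split; auto. apply fnext_incl.
    + exfalso; auto.
  - intros x Tx [h1 h2].
    destruct (classic (exists c, F c /\ ~ incl (fnext c) x)) as [[c [hc hn]]|hA].
    + destruct (Mc c (HF c hc) (IH c hc) x Tx) as [h|h]; [|contradiction].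
      destruct (classic (incl c x)) as [h'|h'].
      * assert (x = c) by (apply incl_eq; auto). subst x.
        apply NNPP; intro hh. apply h2. intros v a [hv|[c' [hc' hv]]].
        { apply tower_G0; auto. }
        destruct (Mc c (HF c hc) (IH c hc) c' (HF c' hc')) as [k|k]; auto.
        exfalso. apply hh. intros v' a' hv'. right. exists c'; auto.
      * intros v a hv. right. exists c. split; auto. apply (IH c hc x Tx); auto. split; auto.
    + exfalso. apply h2. intros v a [hv|[c [hc hv]]].
      * apply tower_G0; auto.
      * assert (incl (fnext c) x) by (apply NNPP; intro; apply hA; eauto).
        apply H. apply fnext_incl; auto.
Qed.

Lemma tower_cmp x y : tower x -> tower y -> incl x y \/ incl y x.
Proof. intros Tx Ty. destruct (Mc x Tx (all_extreme x Tx) y Ty) as [h|h]; auto.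
  left. eapply incl_trans; eauto. apply fnext_incl. Qed.

Lemma tower_valid G : tower G -> gvalid G.
Proof. induction 1 as [G T IH|F HF IH]. apply fnext_valid; auto.
  set (W := fun T => T = G0 \/ (F T)).
  assert (Wv : forall T, W T -> gvalid T) by (intros T [->|h]; auto).
  assert (Wc : forall T1 T2, W T1 -> W T2 -> incl T1 T2 \/ incl T2 T1).
  { intros T1 T2 [->|h1] [->|h2]; auto using incl_refl.
    - left. apply tower_G0; auto.
    - right. apply tower_G0; auto.
    - apply tower_cmp; auto. }
  assert (Ws : forall T, W T -> incl T (gsup F)).
  { intros T [->|h] v a hv. left; auto. right; eauto. }
  assert (Wg : forall v a, gsup F v a -> exists T, W T /\ T v a).
  { intros v a [h|[T [h1 h2]]]. exists G0; split; auto. left; auto. exists T; split; auto. right; auto. }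
  assert (two : forall v a w b, gsup F v a -> gsup F w b -> exists T, W T /\ T v a /\ T w b).
  { intros v a w b h1 h2. destruct (Wg _ _ h1) as [T1 [k1 l1]]. destruct (Wg _ _ h2) as [T2 [k2 l2]].
    destruct (Wc T1 T2 k1 k2) as [c|c]; [exists T2|exists T1]; auto. }
  repeat split.
  - intros v a b h1 h2. destruct (two _ _ _ _ h1 h2) as [T [k [l1 l2]]].
    destruct (Wv T k) as [F1 _]. eauto.
  - left. apply HG0.
  - intros u a w b h1 h2. destruct (two _ _ _ _ h1 h2) as [T [k [l1 l2]]].
    apply (Ws T k). destruct (Wv T k) as [_ [_ [F3 _]]]. auto.
  - intros c u a h. destruct (Wg _ _ h) as [T [k l]]. apply (Ws T k). apply (Wv T k); auto.
  - intros u a h. destruct (Wg _ _ h) as [T [k l]]. apply (Wv T k); auto.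
Qed.

Lemma extend (G : Gr) : gvalid G -> forall v, ~ (exists a, G v a) ->
  exists H, gvalid H /\ incl G H /\ ~ incl H G.
Proof.
  intros [Gf [G0' [Ga [Gs Gp]]]] v nv.
  set (S := fun r => exists s a, G s a /\ r = a - p (vadd s (vsc (-1) v))).
  assert (Sb : forall s a, G s a -> forall r, S r -> r <= p (vadd s v) - a).
  { intros s a hs r [s' [a' [hs' ->]]].
    assert (a + a' <= p (vadd s s')) by (apply Gp; apply Ga; auto).
    assert (vadd s s' = vadd (vadd s v) (vadd s' (vsc (-1) v))).
    { rewrite <- !va_assoc. f_equal. rewrite va_assoc, (va_comm v s'), <- va_assoc, va_opp, va_0. auto. }
    pose proof (Hsub (vadd s v) (vadd s' (vsc (-1) v))). rewrite <- H0 in H1. lra. }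
  destruct (completeness S) as [al [hub hlub]].
  { exists (p (vadd v0 v) - 0). intros r hr. apply (Sb v0 0); auto. }
  { exists (0 - p (vadd v0 (vsc (-1) v))). exists v0, 0; auto. }
  assert (al_up : forall s a, G s a -> al <= p (vadd s v) - a).
  { intros s a hs. apply hlub. intros r hr. apply (Sb s a hs r hr). }
  assert (al_lo : forall s a, G s a -> a - p (vadd s (vsc (-1) v)) <= al).
  { intros s a hs. apply hub. exists s, a; auto. }
  set (H := fun u b => exists s a t, G s a /\ u = vadd s (vsc t v) /\ b = a + t * al).
  assert (dec : forall s a t s' a' t', G s a -> G s' a' -> vadd s (vsc t v) = vadd s' (vsc t' v) -> t = t' /\ s = s').
  { intros s a t s' a' t' h1 h2 he.
    destruct (Req_dec t t') as [->|nt].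
    - split; auto. eapply va_cancel; eauto.
    - exfalso. apply nv.
      assert (e : v = vsc (/ (t' - t)) (vadd s (vsc (-1) s'))).
      { assert (vadd s (vsc (-1) s') = vsc (t' - t) v).
        { apply (va_cancel _ _ _ (vadd s' (vsc t v))).
          rewrite sub_add_cancel, he. rewrite (va_comm (vsc (t' - t) v)), <- va_assoc, <- vs_ds.
          f_equal. f_equal. ring. }
        rewrite H0, vs_assoc. rewrite Rinv_l by lra. rewrite vs_1; auto. }
      exists (/ (t' - t) * (a + -1 * a')). rewrite e. apply Gs. apply Ga; auto. }
  exists H. repeat split.
  - intros u b c [s [a [t [h1 [-> ->]]]]] [s' [a' [t' [h1' [e ->]]]]].
    destruct (dec _ _ _ _ _ _ h1 h1' e) as [-> ->]. rewrite (Gf _ _ _ h1 h1'); auto.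
  - exists v0, 0, 0. split; auto. rewrite vs_0, va_0. split; auto. ring.
  - intros u b w c [s [a [t [h1 [-> ->]]]]] [s' [a' [t' [h1' [-> ->]]]]].
    exists (vadd s s'), (a + a'), (t + t'). split; auto. split; [|ring].
    rewrite vs_ds. rewrite <- !va_assoc. f_equal. rewrite !va_assoc. f_equal. apply va_comm.
  - intros c u b [s [a [t [h1 [-> ->]]]]]. exists (vsc c s), (c * a), (c * t). split; auto.
    split; [|ring]. rewrite vs_dv, vs_assoc; auto.
  - intros u b [s [a [t [h1 [-> ->]]]]].
    destruct (Rtotal_order t 0) as [tn|[t0|tp]].
    + set (w := -t). assert (wp : 0 < w) by (unfold w; lra).
      assert (k := al_lo (vsc (/ w) s) (/ w * a) (Gs _ _ _ h1)).
      assert (vadd (vsc (/ w) s) (vsc (-1) v) = vsc (/ w) (vadd s (vsc t v))).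
      { rewrite vs_dv, vs_assoc. f_equal. f_equal. unfold w. field. lra. }
      rewrite H0, Hhom in k by (apply Rinv_0_lt_compat; auto).
      apply (Rmult_le_compat_l w) in k; [|lra].
      replace (w * (/ w * a - / w * p (vadd s (vsc t v)))) with (a - p (vadd s (vsc t v))) in k by (field; lra).
      unfold w in k. nra.
    + subst t. rewrite vs_0, va_0. replace (a + 0 * al) with a by ring. auto.
    + assert (k := al_up (vsc (/ t) s) (/ t * a) (Gs _ _ _ h1)).
      assert (vadd (vsc (/ t) s) v = vsc (/ t) (vadd s (vsc t v))).
      { rewrite vs_dv, vs_assoc. f_equal. rewrite Rinv_l by lra. rewrite vs_1; auto. }
      rewrite H0, Hhom in k by (apply Rinv_0_lt_compat; auto).
      apply (Rmult_le_compat_l t) in k; [|lra].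
      replace (t * (/ t * p (vadd s (vsc t v)) - / t * a)) with (p (vadd s (vsc t v)) - a) in k by (field; lra).
      nra.
  - intros u b h. exists u, b, 0. split; auto. rewrite vs_0, va_0. split; auto. ring.
  - intro hi. apply nv. exists (0 + 1 * al). apply hi. exists v0, 0, 1. split; auto.
    rewrite va_0l, vs_1. auto.
Qed.

Theorem HB : exists l : V -> R, lin V l /\ (forall v, l v <= p v) /\ (forall v a, G0 v a -> l v = a).
Proof.
  set (top := gsup tower).
  assert (Tt : tower top) by (apply tw_sup; auto).
  assert (Vt := tower_valid top Tt).
  assert (inc : incl (fnext top) top).
  { intros v a h. right. exists (fnext top). split; auto. apply tw_next; auto. }
  assert (full : forall v, exists a, top v a).
  { intro v. apply NNPP; intro nv. destruct (extend top Vt v nv) as [H [h1 [h2 h3]]].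
    apply h3. apply (fnext_max top inc H h1 h2). }
  destruct Vt as [Tf [T0 [Ta [Ts Tp]]]].
  exists (fun v => proj1_sig (constructive_indefinite_description _ (full v))).
  repeat split.
  - intros x y. destruct (constructive_indefinite_description _ (full x)) as [a ha].
    destruct (constructive_indefinite_description _ (full y)) as [b hb].
    destruct (constructive_indefinite_description _ (full (vadd x y))) as [c hc]. simpl.
    eapply Tf; eauto.
  - intros a x. destruct (constructive_indefinite_description _ (full x)) as [b hb].
    destruct (constructive_indefinite_description _ (full (vsc a x))) as [c hc]. simpl.
    eapply Tf; eauto.
  - intro v. destruct (constructive_indefinite_description _ (full v)) as [b hb]. simpl; auto.
  - intros v a h. destruct (constructive_indefinite_description _ (full v)) as [b hb]. simpl.
    eapply Tf; eauto. left; auto.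
Qed.
End HBS.

Lemma inf_ex (P : R -> Prop) : (exists a, P a) -> (exists m, forall a, P a -> m <= a) ->
  {m | (forall a, P a -> m <= a) /\ (forall m', (forall a, P a -> m' <= a) -> m' <= m)}.
Proof. intros ha hb.
  destruct (completeness (fun x => P (- x))) as [s [h1 h2]].
  { destruct hb as [m hm]. exists (- m). intros x hx. specialize (hm _ hx). lra. }
  { destruct ha as [a ha]. exists (- a). rewrite Ropp_involutive; auto. }
  exists (- s). split.
  - intros b hb'. assert (- b <= s) by (apply h1; rewrite Ropp_involutive; auto). lra.
  - intros m' hm'. assert (s <= - m'). { apply h2. intros x hx. specialize (hm' _ hx). lra. } lra.
Qed.

Definition rinf (P : R -> Prop) : R :=
  match excluded_middle_informative ((exists a, P a) /\ (exists m, forall a, P a -> m <= a)) with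
  | left h => proj1_sig (inf_ex P (proj1 h) (proj2 h)) | right _ => 0 end.
Lemma rinf_lb P : (exists m, forall a, P a -> m <= a) -> forall a, P a -> rinf P <= a.
Proof. intros hb a ha. unfold rinf. destruct excluded_middle_informative as [h|h].
  - destruct (inf_ex P _ _) as [m [h1 h2]]; simpl; auto.
  - exfalso; apply h; eauto. Qed.
Lemma rinf_glb P : (exists a, P a) -> forall m', (forall a, P a -> m' <= a) -> m' <= rinf P.
Proof. intros he m' hm. unfold rinf. destruct excluded_middle_informative as [h|h].
  - destruct (inf_ex P _ _) as [m [h1 h2]]; simpl; auto.
  - exfalso; apply h; eauto. Qed.
Lemma le_of_forall_gt (x a : R) : (forall l, a < l -> x <= l) -> x <= a.
Proof. intro h. destruct (Rle_lt_dec x a) as [k|k]; auto. specialize (h ((x+a)/2) ltac:(lra)). lra. Qed.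

Lemma Rabs_m1 : Rabs (-1) = 1. Proof. rewrite Rabs_left; lra. Qed.

Lemma div_nonneg a b : 0 <= a -> 0 < b -> 0 <= a / b.
Proof. intros; unfold Rdiv; apply Rmult_le_pos; [|left; apply Rinv_0_lt_compat]; auto. Qed.
Lemma div_pos a b : 0 < a -> 0 < b -> 0 < a / b.
Proof. intros; unfold Rdiv; apply Rmult_lt_0_compat; [|apply Rinv_0_lt_compat]; auto. Qed.

Ltac linrw Hl := repeat (rewrite (proj1 Hl) || rewrite (proj2 Hl)).
Tactic Notation "linrw" constr(Hl) "in" hyp(H) := repeat (rewrite (proj1 Hl) in H || rewrite (proj2 Hl) in H).

Section Sep.
Variable V : VS.
Variable q : V -> R.
Hypothesis q_tri : forall u w, q (vadd u w) <= q u + q w.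
Hypothesis q_sc : forall c u, q (vsc c u) = Rabs c * q u.
Variables C D : V -> Prop.
Hypothesis Cconv : forall x y t, 0 <= t <= 1 -> C x -> C y -> C (vadd (vsc t x) (vsc (1-t) y)).
Hypothesis Dconv : forall x y t, 0 <= t <= 1 -> D x -> D y -> D (vadd (vsc t x) (vsc (1-t) y)).
Variables (b c0 : V) (d : R).
Hypothesis dpos : 0 < d.
Hypothesis Dball : forall w, q w < d -> D (vadd b w).
Hypothesis Cc0 : C c0.
Hypothesis disj : forall x, C x -> D x -> False.

Lemma q_nonneg u : 0 <= q u.
Proof. pose proof (q_tri u (vsc (-1) u)). rewrite va_opp, q_sc in H.
  assert (q v0 = 0). { rewrite <- (vs_0 (@v0 V)), q_sc, Rabs_R0. ring. }
  rewrite Rabs_m1 in H. lra. Qed.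
Lemma q_zero : q v0 = 0.
Proof. rewrite <- (vs_0 (@v0 V)), q_sc, Rabs_R0. ring. Qed.

Let e0 := vadd b (vsc (-1) c0).
Let K k := exists x y, D x /\ C y /\ k = vadd (vadd x (vsc (-1) y)) (vsc (-1) e0).
Lemma Kconv x y t : 0 <= t <= 1 -> K x -> K y -> K (vadd (vsc t x) (vsc (1-t) y)).
Proof. intros ht [x1 [y1 [h1 [h2 ->]]]] [x2 [y2 [k1 [k2 ->]]]].
  exists (vadd (vsc t x1) (vsc (1-t) x2)), (vadd (vsc t y1) (vsc (1-t) y2)). repeat split; auto.
  unfold e0. vring. Qed.
Lemma Kball k : q k < d -> K k.
Proof. intro h. exists (vadd b k), c0. repeat split; auto. unfold e0. vring. Qed.
Lemma K0 : K v0.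
Proof. apply Kball. rewrite q_zero. lra. Qed.
Lemma Knot : ~ K (vsc (-1) e0).
Proof. intros [x [y [hx [hy he]]]].
  assert (x = y).
  { assert (e : vadd (vsc (-1) e0) (vadd y e0) = vadd (vadd (vadd x (vsc (-1) y)) (vsc (-1) e0)) (vadd y e0)) by (rewrite <- he; auto).
    assert (e1 : vadd (vsc (-1) e0) (vadd y e0) = y) by vring.
    assert (e2 : vadd (vadd (vadd x (vsc (-1) y)) (vsc (-1) e0)) (vadd y e0) = x) by vring.
    congruence. }
  subst; eauto. Qed.

Let Gs v l := 0 < l /\ K (vsc (/ l) v).
Local Notation pg v := (rinf (Gs v)).
Lemma Gs_bdd v : exists m, forall a, Gs v a -> m <= a.
Proof. exists 0. intros a [h _]. lra. Qed.
Lemma Gs_big v l : q v / d < l -> Gs v l.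
Proof. intro h. assert (0 <= q v / d) by (apply div_nonneg; [apply q_nonneg|lra]).
  split; [lra|]. apply Kball. rewrite q_sc. rewrite Rabs_right by (left; apply Rinv_0_lt_compat; lra).
  apply (Rmult_lt_reg_l l); [lra|]. rewrite <- Rmult_assoc, Rinv_r by lra.
  assert (q v < l * d). { apply (Rmult_lt_compat_r d) in h; [|lra]. unfold Rdiv in h.
    rewrite Rmult_assoc, Rinv_l, Rmult_1_r in h by lra. lra. } lra. Qed.
Lemma Gs_ne v : exists l, Gs v l.
Proof. exists (q v / d + 1). apply Gs_big. lra. Qed.
Lemma pg_nonneg v : 0 <= pg v.
Proof. apply rinf_glb. apply Gs_ne. intros a [h _]; lra. Qed.
Lemma pg_q v : pg v <= q v / d.
Proof. apply le_of_forall_gt. intros l hl. apply rinf_lb. apply Gs_bdd. apply Gs_big; auto. Qed.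
Lemma pg_hom c v : 0 < c -> pg (vsc c v) = c * pg v.
Proof. intro hc. apply Rle_antisym.
  - assert (pg (vsc c v) / c <= pg v).
    { apply rinf_glb. apply Gs_ne. intros l [hl hk].
      assert (pg (vsc c v) <= c * l).
      { apply rinf_lb. apply Gs_bdd. split. nra. rewrite vs_assoc.
        replace (/ (c * l) * c) with (/ l) by (field; lra). auto. }
      apply (Rmult_le_reg_l c); auto. unfold Rdiv. rewrite (Rmult_comm (pg _)), <- Rmult_assoc, Rinv_r; lra. }
    apply (Rmult_le_compat_l c) in H; [|lra]. unfold Rdiv in H.
    rewrite (Rmult_comm (pg _)), <- Rmult_assoc, Rinv_r in H; lra.
  - apply rinf_glb. apply Gs_ne. intros l [hl hk].
    assert (pg v <= l / c).
    { apply rinf_lb. apply Gs_bdd. split. apply div_pos; lra.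
      rewrite vs_assoc in hk. replace (/ l * c) with (/ (l / c)) in hk by (field; lra). auto. }
    apply (Rmult_le_compat_l c) in H; [|lra]. replace (c * (l / c)) with l in H by (field; lra). lra.
Qed.
Lemma pg_sub u w : pg (vadd u w) <= pg u + pg w.
Proof.
  assert (forall l1 l2, Gs u l1 -> Gs w l2 -> pg (vadd u w) <= l1 + l2).
  { intros l1 l2 [h1 k1] [h2 k2]. apply rinf_lb. apply Gs_bdd. split. lra.
    assert (e : vsc (/ (l1 + l2)) (vadd u w) =
      vadd (vsc (l1 / (l1+l2)) (vsc (/ l1) u)) (vsc (1 - l1/(l1+l2)) (vsc (/ l2) w))).
    { rewrite !vs_assoc. replace (l1 / (l1 + l2) * / l1) with (/ (l1 + l2)) by (field; lra).
      replace ((1 - l1 / (l1 + l2)) * / l2) with (/ (l1 + l2)) by (field; lra). apply vs_dv. }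
    rewrite e. apply Kconv; auto. split.
    apply div_nonneg; lra. apply (Rmult_le_reg_r (l1 + l2)). lra. unfold Rdiv. field_simplify; lra. }
  assert (forall l2, Gs w l2 -> pg (vadd u w) - l2 <= pg u).
  { intros l2 h2. apply rinf_glb. apply Gs_ne. intros l1 h1. specialize (H l1 l2 h1 h2). lra. }
  assert (pg (vadd u w) - pg u <= pg w).
  { apply rinf_glb. apply Gs_ne. intros l2 h2. specialize (H0 l2 h2). lra. }
  lra. Qed.
Lemma pg_K k : K k -> pg k <= 1.
Proof. intro h. apply rinf_lb. apply Gs_bdd. split. lra. rewrite Rinv_1, vs_1. auto. Qed.
Lemma pg_e0 : 1 <= pg (vsc (-1) e0).
Proof. apply rinf_glb. apply Gs_ne. intros l [hl hk].
  destruct (Rlt_le_dec l 1) as [h|h]; auto. exfalso. apply Knot.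
  assert (e : vsc (-1) e0 = vadd (vsc l (vsc (/ l) (vsc (-1) e0))) (vsc (1 - l) v0)).
  { rewrite vsc_0r, va_0, vs_assoc, Rinv_r, vs_1 by lra. auto. }
  rewrite e. apply Kconv; auto. lra. apply K0. Qed.

Theorem separation : exists l : V -> R, lin V l /\ (forall v, Rabs (l v) <= q v / d) /\
  l b - l c0 = -1 /\ (forall x y, D x -> C y -> l x <= l y).
Proof.
  set (w := vsc (-1) e0).
  assert (wnz : w <> v0). { intro h. apply Knot. fold w. rewrite h. apply K0. }
  set (G0 := fun v a => exists s, v = vsc s w /\ a = s).
  assert (HG0 : gvalid V (fun v => pg v) G0).
  { repeat split.
    - intros v a a' [s [-> ->]] [s' [e ->]].
      destruct (Req_dec s s') as [|n]; auto. exfalso. apply wnz.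
      assert (vsc (s - s') w = v0).
      { replace (s - s') with (s + (-1) * s') by ring. rewrite vs_ds, <- vs_assoc, <- e. apply va_opp. }
      rewrite <- (vs_1 w), <- (Rinv_l (s - s')) by lra. rewrite <- vs_assoc, H. apply vsc_0r.
    - exists 0. rewrite vs_0; auto.
    - intros u a u' a' [s [-> ->]] [s' [-> ->]]. exists (s + s'). rewrite vs_ds; auto.
    - intros c u a [s [-> ->]]. exists (c * s). rewrite vs_assoc; auto.
    - intros u a [s [-> ->]]. destruct (Rlt_le_dec 0 s) as [h|h].
      + rewrite pg_hom by auto. pose proof pg_e0. fold w in H. nra.
      + pose proof (pg_nonneg (vsc s w)). lra. }
  destruct (HB V (fun v => pg v) pg_sub pg_hom G0 HG0) as [l [Hl [Hp Hg]]].
  assert (lw : l w = 1) by (apply Hg; exists 1; rewrite vs_1; auto).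
  assert (le0 : l e0 = -1). { unfold w in lw. rewrite (proj2 Hl) in lw. lra. }
  exists l. split; auto. split; [|split].
  - intro v. apply Rabs_le. split.
    + pose proof (Hp (vsc (-1) v)). pose proof (pg_q (vsc (-1) v)). rewrite (proj2 Hl), q_sc in *.
      rewrite Rabs_m1, Rmult_1_l in H0. lra.
    + pose proof (Hp v). pose proof (pg_q v). lra.
  - unfold e0 in le0. linrw Hl in le0. lra.
  - intros x y hx hy. assert (K (vadd (vadd x (vsc (-1) y)) (vsc (-1) e0))) by (exists x, y; auto).
    pose proof (pg_K _ H). pose proof (Hp (vadd (vadd x (vsc (-1) y)) (vsc (-1) e0))).
    linrw Hl in H1. lra.
Qed.
End Sep.

Section FinRep.
Variable V : VS.
Fixpoint sumabs (fs : list (V -> R)) (v : V) : R :=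
  match fs with nil => 0 | f :: fs' => Rabs (f v) + sumabs fs' v end.
Fixpoint combo (cs : list R) (fs : list (V -> R)) (v : V) : R :=
  match cs, fs with c :: cs', f :: fs' => c * f v + combo cs' fs' v | _, _ => 0 end.

Lemma sumabs_nonneg fs v : 0 <= sumabs fs v.
Proof. induction fs; simpl. lra. pose proof (Rabs_pos (a v)); lra. Qed.

Lemma combo_lin cs : forall fs, (forall f, In f fs -> lin V f) -> lin V (combo cs fs).
Proof. induction cs as [|c cs IH]; intros [|f fs] hf; split; intros; simpl; try ring.
  - destruct (hf f (or_introl eq_refl)) as [h1 h2]. destruct (IH fs (fun g h => hf g (or_intror h))) as [k1 k2].
    rewrite h1, k1. ring.
  - destruct (hf f (or_introl eq_refl)) as [h1 h2]. destruct (IH fs (fun g h => hf g (or_intror h))) as [k1 k2].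
    rewrite h2, k2. ring. Qed.

Lemma lin_shift f g v : lin V f -> lin V g -> lin V (fun u => g (vadd u (vsc (- f u) v))).
Proof. intros [f1 f2] [g1 g2]. split.
  - intros x y. rewrite f1, <- g1. f_equal. vring.
  - intros a x. rewrite f2, <- g2. f_equal. vring. Qed.

Lemma finrep_n n : forall fs, length fs = n -> (forall f, In f fs -> lin V f) ->
  forall L, lin V L -> (exists K, forall v, Rabs (L v) <= K * sumabs fs v) ->
  exists cs, forall v, L v = combo cs fs v.
Proof.
  induction n as [|n IH]; intros fs hlen hf L hL [K hK].
  - destruct fs; [|discriminate]. exists nil. intro v. simpl. specialize (hK v). simpl in hK.
    rewrite Rmult_0_r in hK. pose proof (Rabs_pos (L v)). assert (Rabs (L v) = 0) by lra.
    destruct (Req_dec (L v) 0); auto. exfalso. pose proof (Rabs_no_R0 _ H1). contradiction.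
  - destruct fs as [|f fs]; [discriminate|]. simpl in hlen. injection hlen as hlen.
    assert (hf0 : lin V f) by (apply hf; left; auto).
    assert (hfs : forall g, In g fs -> lin V g) by (intros; apply hf; right; auto).
    destruct (classic (exists v1, f v1 <> 0)) as [[v1 hv1]|hz].
    + set (v := vsc (/ f v1) v1).
      assert (fv : f v = 1) by (unfold v; rewrite (proj2 hf0); field; auto).
      set (sh := fun u => vadd u (vsc (- f u) v)).
      assert (fsh : forall u, f (sh u) = 0).
      { intro u. unfold sh. rewrite (proj1 hf0), (proj2 hf0), fv. ring. }
      set (fs'' := map (fun g u => g (sh u)) fs).
      assert (hl' : length fs'' = n) by (unfold fs''; rewrite length_map; auto).
      assert (hf'' : forall g', In g' fs'' -> lin V g').
      { intros g' hg'. unfold fs'' in hg'. apply in_map_iff in hg'. destruct hg' as [g [<- hg]].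
        apply lin_shift; auto. }
      assert (hL' : lin V (fun u => L (sh u))) by (apply lin_shift; auto).
      assert (hK' : exists K, forall u, Rabs (L (sh u)) <= K * sumabs fs'' u).
      { exists K. intro u. specialize (hK (sh u)). simpl in hK. rewrite fsh, Rabs_R0, Rplus_0_l in hK.
        replace (sumabs fs'' u) with (sumabs fs (sh u)); auto.
        unfold fs''. clear. induction fs; simpl; auto. rewrite IHfs. auto. }
      destruct (IH fs'' hl' hf'' _ hL' hK') as [cs hcs].
      assert (cm : forall u, combo cs fs'' u = combo cs fs (sh u)).
      { intro u. unfold fs''. clear. revert cs. induction fs as [|a fs IHf]; destruct cs; simpl; auto. rewrite IHf; auto. }
      exists ((L v - combo cs fs v) :: cs). intro u. simpl.
      assert (e : u = vadd (sh u) (vsc (f u) v)) by (unfold sh; vring).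
      assert (L u = L (sh u) + f u * L v) by (rewrite e at 1; rewrite (proj1 hL), (proj2 hL); auto).
      rewrite H, hcs, cm. unfold sh at 1. pose proof (combo_lin cs fs hfs) as [c1 c2].
      rewrite c1, c2. ring.
    + destruct (IH fs hlen hfs L hL) as [cs hcs].
      { exists K. intro u. specialize (hK u). simpl in hK.
        assert (f u = 0) by (apply NNPP; intro; apply hz; eauto). rewrite H, Rabs_R0, Rplus_0_l in hK. auto. }
      exists (0 :: cs). intro u. simpl. rewrite hcs. ring.
Qed.
End FinRep.

Section NS.
Variable X : NormedSpace.
Lemma nscal_0 (x : X) : nscal 0 x = nzero.
Proof. apply nnorm_eq0. rewrite nnorm_scal, Rabs_R0. ring. Qed.
Definition XV : VS := mkVS X nzero nadd nscal (nadd_assoc X) (nadd_comm X) (nadd_zero X)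
  (nscal_assoc X) (nscal_one X) (nscal_distr_v X) (nscal_distr_s X) nscal_0.
Lemma nopp_sc (y : X) : nopp y = nscal (-1) y.
Proof. apply (va_cancel XV _ _ y). simpl. rewrite (nadd_comm X (nopp y)), nadd_opp.
  rewrite (nadd_comm X (nscal (-1) y)). exact (eq_sym (va_opp XV y)). Qed.
Lemma vsub_sc (x y : X) : vsub x y = nadd x (nscal (-1) y).
Proof. unfold vsub; rewrite nopp_sc; auto. Qed.
Lemma nnorm_m1 (x : X) : nnorm (nscal (-1) x) = nnorm x.
Proof. rewrite nnorm_scal, Rabs_m1. ring. Qed.
Lemma nnorm_sym (x y : X) : nnorm (nadd x (nscal (-1) y)) = nnorm (nadd y (nscal (-1) x)).
Proof. rewrite <- nnorm_m1. f_equal. exact (ltac:(change (@vsc XV (-1) (@vadd XV x (@vsc XV (-1) y)) = @vadd XV y (@vsc XV (-1) x)); vring)). Qed.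
Lemma nnorm_tri3 (x y z : X) : nnorm (nadd x (nscal (-1) z)) <= nnorm (nadd x (nscal (-1) y)) + nnorm (nadd y (nscal (-1) z)).
Proof. replace (nadd x (nscal (-1) z)) with (nadd (nadd x (nscal (-1) y)) (nadd y (nscal (-1) z))).
  apply nnorm_triangle.
  change (@vadd XV (@vadd XV x (@vsc XV (-1) y)) (@vadd XV y (@vsc XV (-1) z)) = @vadd XV x (@vsc XV (-1) z)); vring. Qed.
Lemma nnorm_eq0_eq (x y : X) : nnorm (nadd x (nscal (-1) y)) = 0 -> x = y.
Proof. intro h. apply nnorm_eq0 in h.
  change (@vadd XV x (@vsc XV (-1) y) = v0) in h.
  assert (e : x = @vadd XV (@vadd XV x (@vsc XV (-1) y)) y) by vring. rewrite e, h. simpl. rewrite nadd_comm. apply nadd_zero. Qed.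

Lemma dual_0 (f : dual X) : f nzero = 0.
Proof. rewrite <- (nscal_0 nzero). rewrite dlin_scal. ring. Qed.
Lemma dual_m1 (f : dual X) x : f (nscal (-1) x) = - f x.
Proof. rewrite dlin_scal. ring. Qed.

Lemma dn_spec (f : dual X) : is_lub (dn_set f) (dual_norm f).
Proof. unfold dual_norm. destruct (completeness _ _ _) as [m hm]. simpl. auto. Qed.
Lemma dn_le (f : dual X) x : nnorm x <= 1 -> Rabs (f x) <= dual_norm f.
Proof. intro h. apply (proj1 (dn_spec f)). exists x; auto. Qed.
Lemma dn_ub (f : dual X) M : (forall x, nnorm x <= 1 -> Rabs (f x) <= M) -> dual_norm f <= M.
Proof. intro h. apply (proj2 (dn_spec f)). intros r [x [hx ->]]; auto. Qed.
Lemma dn_nonneg (f : dual X) : 0 <= dual_norm f.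
Proof. pose proof (dn_le f nzero). rewrite nnorm_zero, dual_0, Rabs_R0 in H. apply H; lra. Qed.
Lemma dn_app (f : dual X) x : Rabs (f x) <= dual_norm f * nnorm x.
Proof. destruct (Req_dec (nnorm x) 0) as [h|h].
  - apply nnorm_eq0 in h. subst. rewrite dual_0, Rabs_R0, nnorm_zero. lra.
  - pose proof (nnorm_nonneg X x). set (n := nnorm x) in *.
    assert (nnorm (nscal (/ n) x) <= 1).
    { rewrite nnorm_scal, Rabs_right by (left; apply Rinv_0_lt_compat; lra). fold n. rewrite Rinv_l; lra. }
    pose proof (dn_le f _ H0) as H1. rewrite dlin_scal, Rabs_mult, Rabs_right in H1 by (left; apply Rinv_0_lt_compat; lra).
    apply (Rmult_le_compat_l n) in H1; [|lra]. rewrite <- Rmult_assoc, Rinv_r in H1 by lra. lra. Qed.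
End NS.

Definition prodVS (V : VS) : VS.
Proof.
  refine (mkVS (V * R) (v0, 0) (fun x y => (vadd (fst x) (fst y), snd x + snd y))
    (fun a x => (vsc a (fst x), a * snd x)) _ _ _ _ _ _ _ _).
  - intros [] [] []; simpl. rewrite va_assoc. f_equal. ring.
  - intros [] []; simpl. rewrite va_comm. f_equal. ring.
  - intros []; simpl. rewrite va_0. f_equal. ring.
  - intros ? ? []; simpl. rewrite vs_assoc. f_equal. ring.
  - intros []; simpl. rewrite vs_1. f_equal. ring.
  - intros ? [] []; simpl. rewrite vs_dv. f_equal. ring.
  - intros ? ? []; simpl. rewrite vs_ds. f_equal. ring.
  - intros []; simpl. rewrite vs_0. f_equal. ring.
Defined.

Definition funVS (T : Type) : VS.
Proof.
  refine (mkVS (T -> R) (fun _ => 0) (fun f h => fun t => f t + h t) (fun a f => fun t => a * f t) _ _ _ _ _ _ _ _);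
  intros; apply functional_extensionality; intros; ring.
Defined.

Lemma abs_le x y : Rabs x <= y -> - y <= x <= y.
Proof. intro h. pose proof (Rle_abs x). pose proof (Rle_abs (- x)). rewrite Rabs_Ropp in H0. lra. Qed.

Lemma le_div_r l x y : 0 < l -> l * x <= y -> x <= y / l.
Proof. intros hl h. replace x with ((l * x) / l) by (field; lra). unfold Rdiv. apply Rmult_le_compat_r; auto.
  left; apply Rinv_0_lt_compat; auto. Qed.
Lemma lt_div_r l x y : 0 < l -> x < y * l -> x / l < y.
Proof. intros hl h. replace y with ((y * l) / l) by (field; lra). unfold Rdiv. apply Rmult_lt_compat_r; auto.
  apply Rinv_0_lt_compat; auto. Qed.


Fixpoint sumL {X : NormedSpace} (l : list X) (h : X -> R) : R :=
  match l with nil => 0 | x :: l' => Rabs (h x) + sumL l' h end.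
Lemma sumL_in {X : NormedSpace} (l : list X) h x : In x l -> Rabs (h x) <= sumL l h.
Proof. induction l as [|y l IH]; simpl. tauto. intros [->|hi]. pose proof (Rabs_pos (h x)).
  induction l; simpl; [lra|]. pose proof (Rabs_pos (h a)). clear IH. 
  assert (0 <= sumL l h) by (clear; induction l; simpl; [lra|pose proof (Rabs_pos (h a)); lra]). lra.
  pose proof (Rabs_pos (h y)). specialize (IH hi). lra. Qed.
Lemma sumL_nonneg {X : NormedSpace} (l : list X) h : 0 <= sumL l h.
Proof. induction l; simpl. lra. pose proof (Rabs_pos (h a)); lra. Qed.
Lemma sumL_tri {X : NormedSpace} (l : list X) f h : sumL l (fun x => f x + h x) <= sumL l f + sumL l h.
Proof. induction l; simpl. lra. pose proof (Rabs_triang (f a) (h a)). lra. Qed.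
Lemma sumL_sc {X : NormedSpace} (l : list X) c f : sumL l (fun x => c * f x) = Rabs c * sumL l f.
Proof. induction l; simpl. ring. rewrite IHl, Rabs_mult. ring. Qed.
Lemma sumabs_map {X : NormedSpace} (l : list X) h :
  sumabs (funVS X) (map (fun x (h : X -> R) => h x) l) h = sumL l h.
Proof. induction l; simpl; auto. rewrite IHl; auto. Qed.
Fixpoint xcomb {X : NormedSpace} (cs : list R) (l : list X) : X :=
  match cs, l with c :: cs', x :: l' => nadd (nscal c x) (xcomb cs' l') | _, _ => nzero end.
Lemma combo_eval {X : NormedSpace} (z : dual X) cs l :
  combo (funVS X) cs (map (fun x (h : X -> R) => h x) l) (dfun X z) = z (xcomb cs l).
Proof. revert l. induction cs as [|c cs IH]; intros [|x l]; simpl; try (rewrite dual_0; auto).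
  rewrite dlin_add, dlin_scal, IH. auto. Qed.

Section Ek.
Variables (X : NormedSpace) (HX : complete X) (g : dual X -> ER).
Variables (eps : R) (Heps : 0 < eps) (x0s : dual X) (x0 : X) (a : R).
Hypothesis ga : g x0s = Fin a.
Hypothesis Hsd : forall ys : dual X, ER_le (Fin (ys x0 - x0s x0 + a - eps)) (g ys).

Local Notation nd x y := (nnorm (nadd x (nscal (-1) y))).
Definition lam := sqrt eps.
Lemma lam_pos : 0 < lam. Proof. apply sqrt_lt_R0; auto. Qed.

Definition Phi (x : X) (r : R) := forall z c, g z = Fin c -> z x - x0s x - c <= r.
Definition Dom x := exists r, Phi x r.
Definition phv x := rinf (Phi x).
Lemma Phi_lb x r : Phi x r -> - a <= r.
Proof. intro h. specialize (h x0s a ga). lra. Qed.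
Lemma Phi_bdd x : exists m, forall r, Phi x r -> m <= r.
Proof. exists (-a). apply Phi_lb. Qed.
Lemma Phi_x0 : Phi x0 (- a + eps).
Proof. intros z c hz. specialize (Hsd z). rewrite hz in Hsd. simpl in Hsd. lra. Qed.
Lemma Dom_x0 : Dom x0. Proof. exists (-a+eps). apply Phi_x0. Qed.
Lemma phv_spec x : Dom x -> Phi x (phv x).
Proof. intros hd z c hz. apply rinf_glb; auto; intros r hr; apply hr; auto. Qed.
Lemma phv_le x r : Phi x r -> phv x <= r.
Proof. intro h. apply rinf_lb; auto. apply Phi_bdd. Qed.
Lemma phv_lb x : Dom x -> - a <= phv x.
Proof. intro h. apply (Phi_lb x). apply phv_spec; auto. Qed.
Lemma phv_x0 : phv x0 <= - a + eps.
Proof. apply phv_le, Phi_x0. Qed.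

Lemma nd_self (x : X) : nd x x = 0.
Proof. pose proof (va_opp (XV X) x). simpl in H. rewrite H. apply nnorm_zero. Qed.
Lemma nd_nonneg (x y : X) : 0 <= nd x y. Proof. apply nnorm_nonneg. Qed.

Lemma dual_diff (z : dual X) (u w : X) : z u - z w = z (nadd u (nscal (-1) w)).
Proof. rewrite dlin_add, dlin_scal. ring. Qed.
Lemma dual_cont (z : dual X) : exists M, 0 <= M /\ forall u w, Rabs (z u - z w) <= M * nd u w.
Proof. destruct (dbounded _ z) as [M hM]. exists (Rabs M). split. apply Rabs_pos.
  intros u w. rewrite dual_diff. eapply Rle_trans. apply hM.
  apply Rmult_le_compat_r. apply nnorm_nonneg. apply RRle_abs. Qed.

Lemma closedness (y x : X) (m : R) :
  (forall d, 0 < d -> exists y', nd y' y < d /\ Dom y' /\ phv y' + lam * nd y' x <= m) ->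
  Phi y (m - lam * nd y x).
Proof.
  intros h z c hz. apply NNPP; intro hn. apply Rnot_le_lt in hn.
  set (eta := z y - x0s y - c - (m - lam * nd y x)).
  destruct (dual_cont z) as [M1 [hM1 k1]]. destruct (dual_cont x0s) as [M2 [hM2 k2]].
  pose proof lam_pos.
  set (d := eta / (M1 + M2 + lam + 1)).
  assert (dp : 0 < d) by (apply div_pos; unfold eta; lra).
  destruct (h d dp) as [y' [h1 [h2 h3]]].
  pose proof (phv_spec y' h2 z c hz).
  pose proof (k1 y y'). pose proof (k2 y y'). rewrite nnorm_sym in H1, H2.
  apply abs_le in H1. apply abs_le in H2.
  pose proof (nnorm_tri3 X y y' x). rewrite (nnorm_sym X y y') in H3.
  assert (d * (M1 + M2 + lam + 1) = eta) by (unfold d; field; lra).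
  pose proof (nd_nonneg y' y).
  assert (M1 * nd y' y <= M1 * d) by (apply Rmult_le_compat_l; lra).
  assert (M2 * nd y' y <= M2 * d) by (apply Rmult_le_compat_l; lra).
  assert (lam * nd y x <= lam * (nd y' y + nd y' x)) by (apply Rmult_le_compat_l; lra).
  assert (lam * nd y' y <= lam * d) by (apply Rmult_le_compat_l; lra).
  unfold eta in H4. lra.
Qed.

Definition Sr x y := Dom y /\ phv y + lam * nd y x <= phv x.
Lemma Sr_refl x : Dom x -> Sr x x.
Proof. intro h. split; auto. rewrite nd_self. lra. Qed.
Lemma Sr_trans x y z : Sr x y -> Sr y z -> Sr x z.
Proof. intros [h1 h2] [k1 k2]. split; auto. pose proof (nnorm_tri3 X z y x). pose proof lam_pos.
  assert (lam * nd z x <= lam * (nd z y + nd y x)) by (apply Rmult_le_compat_l; lra). lra. Qed.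
Definition mS x := rinf (fun r => exists y, Sr x y /\ r = phv y).
Lemma mS_lb x y : Sr x y -> mS x <= phv y.
Proof. intro h. apply rinf_lb. exists (-a). intros r [y' [[hd _] ->]]. apply phv_lb; auto. eauto. Qed.
Lemma step_ex x : Dom x -> forall n : nat, exists y, Sr x y /\ phv y <= mS x + (1/2)^n.
Proof. intros hx n. apply NNPP; intro hn.
  assert (mS x + (1/2)^n <= mS x).
  { apply rinf_glb. exists (phv x), x. split; auto. apply Sr_refl; auto.
    intros r [y [hy ->]]. apply NNPP; intro k. apply hn. exists y. split; auto. lra. }
  pose proof (pow_lt (1/2) n ltac:(lra)). lra. Qed.
Definition stepf (n : nat) (p : {x : X | Dom x}) : {x : X | Dom x} :=
  let (y, hy) := constructive_indefinite_description _ (step_ex (proj1_sig p) (proj2_sig p) n) in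
  exist _ y (proj1 (proj1 hy)).
Lemma stepf_spec n p : Sr (proj1_sig p) (proj1_sig (stepf n p)) /\ phv (proj1_sig (stepf n p)) <= mS (proj1_sig p) + (1/2)^n.
Proof. unfold stepf. destruct (constructive_indefinite_description _ _) as [y hy]. simpl. auto. Qed.
Fixpoint sq (n : nat) : {x : X | Dom x} := match n with O => exist _ x0 Dom_x0 | S n => stepf n (sq n) end.
Definition xn n := proj1_sig (sq n).
Lemma xn_dom n : Dom (xn n). Proof. unfold xn. destruct (sq n); auto. Qed.
Lemma Sr_seq n k : Sr (xn n) (xn (n + k)).
Proof. induction k. rewrite Nat.add_0_r. apply Sr_refl, xn_dom.
  eapply Sr_trans; eauto. rewrite Nat.add_succ_r. unfold xn at 2. simpl. apply stepf_spec. Qed.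
Lemma Sr_small n y : Sr (xn (S n)) y -> lam * nd y (xn (S n)) <= (1/2)^n.
Proof. intro h. destruct (stepf_spec n (sq n)) as [h1 h2]. fold (xn n) in h1, h2.
  change (proj1_sig (stepf n (sq n))) with (xn (S n)) in h1, h2.
  pose proof (mS_lb _ _ (Sr_trans _ _ _ h1 h)). destruct h. lra. Qed.
Lemma half_small e : 0 < e -> exists n : nat, (1/2)^n < e.
Proof. intro he. destruct (pow_lt_1_zero (1/2) ltac:(rewrite Rabs_right; lra) e he) as [N hN].
  exists N. specialize (hN N (le_n N)). eapply Rle_lt_trans; [apply Rle_abs|]; auto. Qed.
Lemma Sr_close n y : Sr (xn (S n)) y -> nd y (xn (S n)) <= (1/2)^n / lam.
Proof. intro h. pose proof (Sr_small n y h). pose proof lam_pos.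
  apply le_div_r; auto. Qed.
Lemma xn_far n m : (S n <= m)%nat -> nd (xn m) (xn (S n)) <= (1/2)^n / lam.
Proof. intro h. apply Sr_close. replace m with (S n + (m - S n))%nat by lia. apply Sr_seq. Qed.
Lemma xn_cauchy : forall e, 0 < e -> exists N, forall m k, (N <= m)%nat -> (N <= k)%nat -> nnorm (vsub (xn m) (xn k)) < e.
Proof. intros e he. pose proof lam_pos. destruct (half_small (e * lam / 2)) as [n hn].
  { apply div_pos; nra. }
  exists (S n). intros m k hm hk. rewrite vsub_sc. pose proof (xn_far n m hm). pose proof (xn_far n k hk).
  pose proof (nnorm_tri3 X (xn m) (xn (S n)) (xn k)). rewrite (nnorm_sym X (xn (S n))) in H2.
  assert ((1/2)^n / lam < e / 2).
  { apply lt_div_r; auto. unfold Rdiv in hn. replace (e / 2 * lam) with (e * lam * / 2) by (field; lra). lra. }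
  lra. Qed.
Lemma xb_ex : exists xb, forall e, 0 < e -> exists N, forall n, (N <= n)%nat -> nd (xn n) xb < e.
Proof. destruct (HX xn xn_cauchy) as [l hl]. exists l. intros e he. destruct (hl e he) as [N hN].
  exists N. intros n hn. rewrite <- vsub_sc. auto. Qed.

Theorem ekeland : exists xb, Dom xb /\ phv xb + lam * nd xb x0 <= phv x0 /\
  forall y, Dom y -> phv xb - lam * nd y xb <= phv y.
Proof.
  destruct xb_ex as [xb hxb]. pose proof lam_pos.
  assert (Sxb : forall n, Sr (xn n) xb).
  { intro n. assert (P : Phi xb (phv (xn n) - lam * nd xb (xn n))).
    { apply closedness. intros d hd. destruct (hxb d hd) as [N hN]. exists (xn (n + N)).
      split. apply hN; lia. destruct (Sr_seq n N); auto. }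
    split. eexists; eauto. pose proof (phv_le _ _ P). lra. }
  assert (uniq : forall y, Sr xb y -> y = xb).
  { intros y hy. apply (nnorm_eq0_eq X). apply Rle_antisym; [|apply nnorm_nonneg].
    apply le_of_forall_gt. intros e he.
    destruct (half_small (e * lam / 3)) as [n hn]. apply div_pos; nra.
    destruct (hxb (e/3) ltac:(lra)) as [N hN].
    pose proof (Sr_close n y (Sr_trans _ _ _ (Sxb (S n)) hy)).
    pose proof (hN (S n + N)%nat ltac:(lia)).
    pose proof (xn_far n (S n + N) ltac:(lia)).
    pose proof (nnorm_tri3 X y (xn (S n + N)) xb).
    pose proof (nnorm_tri3 X y (xn (S n)) (xn (S n + N))). rewrite (nnorm_sym X (xn (S n))) in H4.
    assert ((1/2)^n / lam < e / 3).
    { apply lt_div_r; auto. unfold Rdiv in hn. replace (e / 3 * lam) with (e * lam * / 3) by (field; lra). lra. }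
    pose proof (nnorm_tri3 X y (xn (S n)) xb).
    assert (nd (xn (S n)) xb <= nd (xn (S n)) (xn (S n + N)) + nd (xn (S n + N)) xb) by apply nnorm_tri3.
    rewrite (nnorm_sym X (xn (S n)) (xn (S n + N))) in H7.
    lra. }
  exists xb. destruct (Sxb 0%nat) as [hd h0]. split; auto. split; auto.
  intros y hy. apply NNPP; intro hn. apply Rnot_le_lt in hn.
  assert (Sr xb y) by (split; auto; lra). apply uniq in H0. subst y. rewrite nd_self in hn. lra.
Qed.

Lemma Phi_conv x y r1 r2 t : 0 <= t <= 1 -> Phi x r1 -> Phi y r2 ->
  Phi (nadd (nscal t x) (nscal (1-t) y)) (t * r1 + (1-t) * r2).
Proof. intros ht h1 h2 z c hz. specialize (h1 z c hz). specialize (h2 z c hz).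
  rewrite !dlin_add, !dlin_scal.
  assert (t * (z x - x0s x - c) <= t * r1) by (apply Rmult_le_compat_l; lra).
  assert ((1-t) * (z y - x0s y - c) <= (1-t) * r2) by (apply Rmult_le_compat_l; lra). lra. Qed.

Theorem subgrad (xb : X) : Dom xb -> (forall y, Dom y -> phv xb - lam * nd y xb <= phv y) ->
  exists w : dual X, (forall u, Rabs (w u) <= lam * nnorm u) /\
    (forall u, Dom (nadd xb u) -> phv xb + w u <= phv (nadd xb u)).
Proof.
  intros hxb hek. pose proof lam_pos as hl.
  set (V := prodVS (XV X)).
  set (q := fun v : V => nnorm (fst v) + Rabs (snd v)).
  set (C := fun v : V => Dom (nadd xb (fst v)) /\ phv (nadd xb (fst v)) - phv xb <= snd v).
  set (D := fun v : V => snd v < - lam * nnorm (fst v)).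
  set (d := / (1 + lam)).
  assert (dp : 0 < d) by (apply Rinv_0_lt_compat; lra).
  assert (eqxb : forall u, nd (nadd xb u) xb = nnorm u).
  { intro u. f_equal. change (@vadd (XV X) (@vadd (XV X) xb u) (@vsc (XV X) (-1) xb) = u). vring. }
  destruct (separation V q) with (C := C) (D := D) (b := ((nzero : X), -1) : V) (c0 := ((nzero : X), 0) : V) (d := d)
    as [l [Hl [Hq [Hbc Hsep]]]].
  - intros [u t] [u' t']. unfold q; simpl. pose proof (nnorm_triangle X u u'). pose proof (Rabs_triang t t'). lra.
  - intros c [u t]. unfold q; simpl. rewrite nnorm_scal, Rabs_mult. ring.
  - intros [u1 t1] [u2 t2] s hs [k1 k2] [m1 m2]. unfold C; simpl in *.
    assert (e : nadd xb (nadd (nscal s u1) (nscal (1 - s) u2)) = nadd (nscal s (nadd xb u1)) (nscal (1-s) (nadd xb u2))).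
    { change (@vadd (XV X) xb (@vadd (XV X) (@vsc (XV X) s u1) (@vsc (XV X) (1 - s) u2)) = @vadd (XV X) (@vsc (XV X) s (@vadd (XV X) xb u1)) (@vsc (XV X) (1-s) (@vadd (XV X) xb u2))). vring. }
    rewrite e. pose proof (Phi_conv _ _ _ _ s hs (phv_spec _ k1) (phv_spec _ m1)).
    split. eexists; eauto. pose proof (phv_le _ _ H).
    assert (s * phv (nadd xb u1) <= s * (phv xb + t1)) by (apply Rmult_le_compat_l; lra).
    assert ((1-s) * phv (nadd xb u2) <= (1-s) * (phv xb + t2)) by (apply Rmult_le_compat_l; lra). lra.
  - intros [u1 t1] [u2 t2] s hs k1 k2. unfold D in *; simpl in *.
    pose proof (nnorm_triangle X (nscal s u1) (nscal (1-s) u2)). rewrite !nnorm_scal, !Rabs_right in H by lra.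
    assert (lam * nnorm (nadd (nscal s u1) (nscal (1 - s) u2)) <= lam * (s * nnorm u1 + (1 - s) * nnorm u2)) by (apply Rmult_le_compat_l; lra).
    destruct (Rlt_le_dec 0 s) as [sp|s0].
    + assert (s * (t1 + lam * nnorm u1) < 0) by (replace 0 with (s * 0) by ring; apply Rmult_lt_compat_l; lra).
      assert ((1-s) * (t2 + lam * nnorm u2) <= 0) by (replace 0 with ((1-s) * 0) by ring; apply Rmult_le_compat_l; lra). lra.
    + assert (s = 0) by lra. subst s. assert (1 - 0 = 1) by ring. rewrite H1 in *. lra.
  - lra.
  - intros [wu wt] hw. unfold D, q in *; simpl in *. rewrite (nadd_comm X nzero wu), nadd_zero.
    pose proof (Rle_abs wt). pose proof (nnorm_nonneg X wu). pose proof (Rabs_pos wt).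
    assert ((1 + lam) * d = 1) by (unfold d; field; lra).
    assert (lam * nnorm wu <= (1 + lam) * nnorm wu) by nra.
    assert (Rabs wt <= (1 + lam) * Rabs wt) by nra.
    assert ((1+lam)*(nnorm wu + Rabs wt) < (1+lam)*d) by (apply Rmult_lt_compat_l; lra). lra.
  - unfold C; simpl. rewrite nadd_zero. split; auto. lra.
  - intros [u t] [k1 k2] k3. unfold C, D in *; simpl in *. specialize (hek _ k1). rewrite eqxb in hek. lra.
  - set (al := fun u : X => l (@pair (vc (XV X)) R u 0)).
    assert (lsplit : forall u t, l (@pair (vc (XV X)) R u t) = al u + t * l (@pair (vc (XV X)) R nzero 1)).
    { intros u t. unfold al. rewrite <- (proj2 Hl), <- (proj1 Hl). f_equal. simpl. f_equal.
      symmetry. change (@vadd (XV X) u (@vsc (XV X) t v0) = u). vring. ring. }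
    assert (al0 : al nzero = 0). { unfold al. exact (lin_0 V l Hl). }
    assert (Hb' : l (@pair (vc (XV X)) R nzero (-1)) - l (@pair (vc (XV X)) R nzero 0) = -1) by exact Hbc.
    rewrite (lsplit nzero (-1)), (lsplit nzero 0), al0 in Hb'. assert (beta1 : l (@pair (vc (XV X)) R nzero 1) = 1) by lra.
    assert (Hs : forall u t u' t', D (u, t) -> C (u', t') -> al u + t <= al u' + t').
    { intros u t u' t' h1 h2. specialize (Hsep _ _ h1 h2). rewrite (lsplit u t), (lsplit u' t'), beta1 in Hsep. lra. }
    assert (alin1 : forall x y, al (nadd x y) = al x + al y).
    { intros x y. unfold al. rewrite <- (proj1 Hl). simpl. rewrite Rplus_0_r. auto. }
    assert (alin2 : forall c x, al (nscal c x) = c * al x).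
    { intros c x. unfold al. rewrite <- (proj2 Hl). simpl. rewrite Rmult_0_r. auto. }
    assert (albd : forall u, al u <= lam * nnorm u).
    { intro u. apply le_of_forall_gt. intros m hm. set (eta := m - lam * nnorm u).
      specialize (Hs u (- lam * nnorm u - eta) nzero 0).
      assert (D (u, - lam * nnorm u - eta)) by (unfold D; simpl; unfold eta; lra).
      assert (C (nzero, 0)) by (unfold C; simpl; rewrite nadd_zero; split; auto; lra).
      specialize (Hs H H0). rewrite al0 in Hs. unfold eta in Hs. lra. }
    assert (wb : exists M, forall x, Rabs (- al x) <= M * nnorm x).
    { exists lam. intro x. rewrite Rabs_Ropp. apply Rabs_le. split.
      - pose proof (albd (nscal (-1) x)). rewrite alin2, nnorm_m1 in H. lra.
      - apply albd. }
    set (w := {| dfun := fun x => - al x;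
                 dlin_add := ltac:(intros; simpl; rewrite alin1; ring);
                 dlin_scal := ltac:(intros; simpl; rewrite alin2; ring);
                 dbounded := wb |} : dual X).
    exists w. split.
    + intro u. simpl. rewrite Rabs_Ropp. apply Rabs_le. split.
      * pose proof (albd (nscal (-1) u)). rewrite alin2, nnorm_m1 in H. lra.
      * apply albd.
    + intros u hu. simpl. apply le_of_forall_gt. intros m hm.
      specialize (Hs nzero (phv (nadd xb u) - m) u (phv (nadd xb u) - phv xb)).
      assert (D (nzero, phv (nadd xb u) - m)) by (unfold D; simpl; rewrite nnorm_zero; lra).
      assert (C (u, phv (nadd xb u) - phv xb)) by (unfold C; simpl; split; auto; lra).
      specialize (Hs H H0). rewrite al0 in Hs. lra.
Qed.

Hypothesis Hprop : proper g.
Hypothesis Hconv : convex g.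
Hypothesis Hlsc : weak_star_lsc g.

Theorem biconj (ys : dual X) (r : R) : ~ ER_le (g ys) (Fin r) ->
  exists x alpha, (forall z c, g z = Fin c -> z x - alpha <= c) /\ r < ys x - alpha.
Proof.
  intro hr.
  assert (exists r', r < r' /\ ~ ER_le (g ys) (Fin r')) as [r' [hr1 hr2]].
  { destruct (g ys) as [v|] eqn:e; simpl in hr.
    - exists ((r + v)/2). split. lra. simpl. lra.
    - exists (r + 1). split. lra. simpl. auto. }
  destruct (Hlsc ys r' hr2) as [l [d0 [hd0 hl]]].
  set (dd := Rmin d0 ((r' - r)/2)).
  assert (ddp : 0 < dd) by (unfold dd; apply Rmin_pos; lra).
  assert (dd1 : dd <= d0) by apply Rmin_l. assert (dd2 : dd <= (r'-r)/2) by apply Rmin_r.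
  set (V := prodVS (funVS X)).
  set (q := fun v : V => sumL l (fst v) + Rabs (snd v)).
  set (r0 := r' - dd).
  set (b := (dfun X ys, r0) : V).
  set (C := fun v : V => exists z c, g z = Fin c /\ c <= snd v /\ fst v = dfun X z).
  set (D := fun v : V => q (vadd v (vsc (-1) b)) < dd).
  destruct Hprop as [z0 hz0]. unfold in_dom in hz0. destruct (g z0) as [c0|] eqn:ez0; [|contradiction].
  assert (qtri : forall u w : V, q (vadd u w) <= q u + q w).
  { intros [u t] [u' t']. unfold q; simpl. pose proof (sumL_tri l u u'). pose proof (Rabs_triang t t'). lra. }
  assert (qsc : forall c (u : V), q (vsc c u) = Rabs c * q u).
  { intros c [u t]. unfold q; simpl. rewrite sumL_sc, Rabs_mult. ring. }
  destruct (separation V q qtri qsc C D) with (b := b) (c0 := (dfun X z0, c0) : V) (d := dd)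
    as [L [HL [Hq [Hbc Hsep]]]]; auto.
  - intros [u1 t1] [u2 t2] s hs [z1 [c1 [k1 [k2 k3]]]] [z2 [c2 [m1 [m2 m3]]]]. simpl in *. subst u1 u2.
    destruct (Req_dec s 1) as [s1|s1]; [|destruct (Req_dec s 0) as [s0|s0]].
    + subst s. exists z1, c1. split; auto. split. simpl; lra.
      apply functional_extensionality; intro; simpl; ring.
    + subst s. exists z2, c2. split; auto. split. simpl; lra.
      apply functional_extensionality; intro; simpl; ring.
    + pose proof (Hconv z1 z2 c1 c2 s ltac:(lra) k1 m1).
      destruct (g (dual_lin s (1 - s) z1 z2)) as [cc|] eqn:ec; simpl in H; [|contradiction].
      exists (dual_lin s (1 - s) z1 z2), cc. split; auto. split. simpl.
      assert (s * c1 <= s * t1) by (apply Rmult_le_compat_l; lra).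
      assert ((1-s) * c2 <= (1-s) * t2) by (apply Rmult_le_compat_l; lra). lra.
      apply functional_extensionality; intro; simpl; ring.
  - intros x y s hs hx hy. unfold D in *.
    assert (e : vadd (vadd (vsc s x) (vsc (1 - s) y)) (vsc (-1) b) = vadd (vsc s (vadd x (vsc (-1) b))) (vsc (1-s) (vadd y (vsc (-1) b)))) by vring.
    rewrite e. eapply Rle_lt_trans. apply qtri. rewrite !qsc, !Rabs_right by lra.
    destruct (Req_dec s 0) as [s0|s0]. subst s. pose proof (sumL_nonneg l (fst (vadd x (vsc (-1) b)))). nra.
    assert (s * q (vadd x (vsc (-1) b)) < s * dd) by (apply Rmult_lt_compat_l; lra).
    assert ((1-s) * q (vadd y (vsc (-1) b)) <= (1-s) * dd) by (apply Rmult_le_compat_l; lra). lra.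
  - intros w hw. unfold D. assert (e : vadd (vadd b w) (vsc (-1) b) = w) by vring. rewrite e; auto.
  - exists z0, c0. simpl. repeat split; auto. lra.
  - intros [h t] [z [c [k1 [k2 k3]]]] hD. simpl in *. subst h. unfold D, q, b in hD. simpl in hD.
    assert (forall x, In x l -> Rabs (z x - ys x) < d0).
    { intros x hx. pose proof (sumL_in l (fun t0 => z t0 + -1 * ys t0) x hx). simpl in H.
      pose proof (Rabs_pos (t + -1 * r0)). replace (z x - ys x) with (z x + -1 * ys x) by ring. lra. }
    specialize (hl z H). rewrite k1 in hl. simpl in hl.
    pose proof (Rle_abs (t + -1 * r0)). pose proof (sumL_nonneg l (fun t0 => z t0 + -1 * ys t0)).
    unfold r0 in *. lra.
  -
    set (LL := fun h : X -> R => L ((h, 0) : V)).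
    set (beta := L ((fun _ : X => 0, 1) : V)).
    assert (Lsplit : forall h t, L ((h, t) : V) = LL h + t * beta).
    { intros h t. unfold LL, beta. rewrite <- (proj2 HL), <- (proj1 HL). f_equal. simpl. f_equal.
      apply functional_extensionality; intro; ring. ring. }
    assert (LLlin : lin (funVS X) LL).
    { split.
      - intros f h. unfold LL. rewrite <- (proj1 HL). f_equal. simpl. f_equal. ring.
      - intros c f. unfold LL. rewrite <- (proj2 HL). f_equal. simpl. f_equal. ring. }
    assert (LLb : exists K, forall h, Rabs (LL h) <= K * sumabs (funVS X) (map (fun x (h : X -> R) => h x) l) h).
    { exists (/ dd). intro h. rewrite sumabs_map. unfold LL. pose proof (Hq ((h, 0) : V)). unfold q in H; simpl in H.
      rewrite Rabs_R0, Rplus_0_r in H. unfold Rdiv in H. lra. }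
    destruct (finrep_n (funVS X) _ (map (fun x (h : X -> R) => h x) l) eq_refl) with (L := LL) as [cs hcs]; auto.
    { intros f hf. apply in_map_iff in hf. destruct hf as [x [<- _]]. split; intros; simpl; ring. }
    set (xl := xcomb cs l).
    assert (LLz : forall z : dual X, LL (dfun X z) = z xl).
    { intro z. rewrite hcs. apply combo_eval. }
    assert (Hs : forall h t h' t', D ((h, t) : V) -> C ((h', t') : V) -> LL h + t * beta <= LL h' + t' * beta).
    { intros h t h' t' k1 k2. specialize (Hsep _ _ k1 k2). rewrite !Lsplit in Hsep. auto. }
    assert (bD : D b). { unfold D. assert (e : vadd b (vsc (-1) b) = v0) by vring. rewrite e. unfold q. simpl.
      rewrite Rabs_R0. replace (sumL l (fun _ => 0)) with 0. lra. clear. induction l; simpl; auto. rewrite Rabs_R0, <- IHl. ring. }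
    assert (Cz : forall z c, g z = Fin c -> C ((dfun X z, c) : V)).
    { intros z c hz. exists z, c. simpl. repeat split; auto. lra. }
    assert (beta_nn : 0 <= beta).
    { apply Rnot_lt_le; intro hb.
      set (Q := LL (dfun X ys) + r0 * beta - LL (dfun X z0)).
      set (t := Rabs c0 + (Rabs Q + 1) / (- beta)).
      assert (C ((dfun X z0, t) : V)).
      { exists z0, c0. simpl. repeat split; auto. unfold t. pose proof (Rabs_pos Q). pose proof (Rle_abs c0).
        assert (0 <= (Rabs Q + 1) / - beta) by (apply div_nonneg; lra). lra. }
      specialize (Hs _ _ _ _ bD H).
      assert (t * beta = Rabs c0 * beta - Rabs Q - 1) by (unfold t; field; lra).
      assert (Rabs c0 * beta <= 0) by (pose proof (Rabs_pos c0); nra).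
      pose proof (Rle_abs (- Q)) as hQ. rewrite Rabs_Ropp in hQ. unfold Q in *. lra. }
    destruct (Rle_lt_or_eq_dec 0 beta beta_nn) as [bp|b0].
    + exists (nscal (- / beta) xl), (ys (nscal (- / beta) xl) - r0). split.
      * intros z c hz. specialize (Hs _ _ _ _ bD (Cz z c hz)). rewrite !LLz in Hs.
        rewrite !dlin_scal.
        assert (ys xl + r0 * beta <= z xl + c * beta) by exact Hs.
        assert (- / beta * z xl - (- / beta * ys xl - r0) = (ys xl - z xl) / beta + r0) by (field; lra).
        rewrite H0. apply (Rmult_le_reg_r beta); auto. unfold Rdiv. rewrite Rmult_plus_distr_r, Rmult_assoc, Rinv_l by lra. lra.
      * unfold r0. lra.
    + subst beta. rewrite <- b0 in *.
      set (S0 := sumL l (fun x => z0 x - ys x)).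
      assert (S0nn : 0 <= S0) by apply sumL_nonneg.
      set (s := dd / (2 * (S0 + 1))).
      assert (sp : 0 < s) by (apply div_pos; lra).
      assert (Lmarg : forall z c, g z = Fin c -> z xl >= ys xl + s).
      { intros z c hz. set (w := (fun x => s * (z0 x - ys x), 0) : V).
        assert (D (vadd b w)).
        { unfold D. assert (e : vadd (vadd b w) (vsc (-1) b) = w) by vring. rewrite e.
          unfold q, w. simpl. rewrite Rabs_R0, Rplus_0_r, sumL_sc, Rabs_right by lra. fold S0.
          assert (e2 : dd / (2 * (S0 + 1)) * S0 = dd * S0 / (2 * (S0 + 1))) by (field; lra).
          unfold s. rewrite e2. apply lt_div_r. lra. nra. }
        pose proof (Hsep _ _ H (Cz z c hz)) as hs.
        assert (e1 : vadd b w = ((vadd (dfun X ys : funVS X) (vsc s (vadd (dfun X z0 : funVS X) (vsc (-1) (dfun X ys : funVS X)))), r0) : V)).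
        { unfold b, w. simpl. f_equal. apply functional_extensionality; intro; simpl; ring. ring. }
        rewrite e1, !Lsplit in hs. linrw LLlin in hs. rewrite !LLz in hs.
        assert (Hb' : L ((dfun X ys, r0) : V) - L ((dfun X z0, c0) : V) = -1) by exact Hbc.
        rewrite !Lsplit, !LLz in Hb'. assert (e3 : z0 xl + -1 * ys xl = 1) by lra. rewrite e3 in hs. lra. }
      set (kap := x0s x0 - a + eps).
      set (M := (Rabs r + Rabs (ys x0 - kap) + 1) / s).
      assert (Mp : 0 < M) by (apply div_pos; auto; pose proof (Rabs_pos r); pose proof (Rabs_pos (ys x0 - kap)); lra).
      exists (nadd x0 (nscal (- M) xl)), (kap - M * (ys xl + s)). split.
      * intros z c hz. rewrite dlin_add, dlin_scal. specialize (Lmarg z c hz).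
        specialize (Hsd z). rewrite hz in Hsd. simpl in Hsd. unfold kap.
        assert (M * (ys xl + s) <= M * z xl) by (apply Rmult_le_compat_l; lra). lra.
      * rewrite dlin_add, dlin_scal.
        assert (M * s = Rabs r + Rabs (ys x0 - kap) + 1) by (unfold M; field; lra).
        pose proof (Rle_abs r). pose proof (Rle_abs (- (ys x0 - kap))). rewrite Rabs_Ropp in H1.
        lra.
Qed.

End Ek.

Theorem mainTheorem2 (X : NormedSpace) (HX : complete X) (g : dual X -> ER)
  (Hprop : proper g) (Hconv : convex g) (Hlsc : weak_star_lsc g)
  (eps beta : R) (Heps : 0 < eps) (Hbeta : 0 <= beta)
  (x0s : dual X) (x0 : X) (Hx0s : in_dom g x0s) (Hx0 : eps_subdiff_X g eps x0s x0) :
  exists (xes : dual X) (xe : X),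
    in_dom g xes /\
    eps_subdiff_X g 0 xes xe /\
    dual_norm (dual_sub xes x0s) <= sqrt eps * (1 + beta * dual_norm x0s) /\
    Rabs (fval (g xes) - fval (g x0s))
      <= sqrt eps * (nnorm x0 + beta * Rabs (x0s x0)) + 2 * eps /\
    nnorm (vsub xe x0) <= sqrt eps /\
    (forall xs : dual X, Rabs (xs xe - xs x0) <= sqrt eps * dual_norm xs) /\
    eps_subdiff_X g (2 * eps) xes x0 /\
    Rabs (dual_sub xes x0s (vsub xe x0)) <= eps.
Proof.
  destruct Hx0 as [a [ga Hsd]].
  destruct (ekeland X HX g eps Heps x0s x0 a ga Hsd) as [xb [hdom [hek1 hek2]]].
  destruct (subgrad X g eps Heps x0s a ga xb hdom hek2) as [w [hwb hws]].
  pose proof (lam_pos eps Heps) as hl.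
  assert (lam2 : lam eps * lam eps = eps) by (unfold lam; apply sqrt_sqrt; lra).
  set (m := phv X g x0s xb).
  assert (hm : - a <= m) by (apply (phv_lb X g x0s a ga); auto).
  assert (hx0 : phv X g x0s x0 <= - a + eps) by (apply (phv_x0 X g eps x0s x0 a ga Hsd)).
  assert (dx0 : Dom X g x0s x0) by (apply (Dom_x0 X g eps x0s x0 a Hsd)).
  set (xes := dual_lin 1 1 x0s w).
  assert (xesv : forall x, xes x = x0s x + w x) by (intro; simpl; ring).
  assert (eq_shift : forall y, nadd xb (nadd y (nscal (-1) xb)) = y).
  { intro y. change (@vadd (XV X) xb (@vadd (XV X) y (@vsc (XV X) (-1) xb)) = y). vring. }
  assert (wdiff : forall y, w (nadd y (nscal (-1) xb)) = w y - w xb) by (intro; rewrite dlin_add, dlin_scal; ring).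
  assert (hg : ER_le (g xes) (Fin (w xb - m))).
  { apply NNPP; intro hn.
    destruct (biconj X g eps x0s x0 a Hsd Hprop Hconv Hlsc xes _ hn) as [x [al [h1 h2]]].
    assert (P : Phi X g x0s x (al - x0s x)).
    { intros z c hz. specialize (h1 z c hz). lra. }
    assert (dx : Dom X g x0s x) by (exists (al - x0s x); auto).
    pose proof (phv_le X g x0s a ga x _ P).
    assert (Dom X g x0s (nadd xb (nadd x (nscal (-1) xb)))) by (rewrite eq_shift; auto).
    specialize (hws _ H0). rewrite eq_shift, wdiff in hws. rewrite xesv in h2. fold m in hws. lra. }
  destruct (g xes) as [gx|] eqn:egx; [|simpl in hg; contradiction]. simpl in hg.
  assert (k1 : w (nadd xb (nscal (-1) x0)) <= lam eps * nnorm (nadd xb (nscal (-1) x0))).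
  { pose proof (hwb (nadd xb (nscal (-1) x0))). apply abs_le in H. lra. }
  assert (k2 : - w (nadd xb (nscal (-1) x0)) <= eps).
  { assert (Dom X g x0s (nadd xb (nadd x0 (nscal (-1) xb)))) by (rewrite eq_shift; auto).
    specialize (hws _ H). rewrite eq_shift, wdiff in hws. rewrite dlin_add, dlin_scal. fold m in hws. lra. }
  assert (k3 : lam eps * nnorm (nadd xb (nscal (-1) x0)) <= eps) by (fold m in hek1; lra).
  assert (wx0 : Rabs (w x0) <= lam eps * nnorm x0) by apply hwb.
  assert (wsplit : w xb = w x0 + w (nadd xb (nscal (-1) x0))) by (rewrite dlin_add, dlin_scal; ring).
  assert (gup : gx <= a + w x0 + eps) by (fold m in hek1; lra).
  assert (glo : a + w x0 - eps <= gx).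
  { specialize (Hsd xes). rewrite egx in Hsd. simpl in Hsd. lra. }
  assert (ndle : nnorm (nadd xb (nscal (-1) x0)) <= lam eps).
  { apply (Rmult_le_reg_l (lam eps)); auto. lra. }
  exists xes, xb. unfold lam in *. repeat split.
  - unfold in_dom. rewrite egx. discriminate.
  - exists gx. split; auto. intros z. destruct (g z) as [c|] eqn:ez; simpl; auto.
    pose proof (phv_spec X g x0s xb hdom z c ez). fold m in H. lra.
  - apply dn_ub. intros x hx. simpl. replace (1 * (1 * x0s x + 1 * w x) + -1 * x0s x) with (w x) by ring.
    pose proof (hwb x). pose proof (dn_nonneg X x0s). pose proof (sqrt_pos eps).
    assert (sqrt eps * nnorm x <= sqrt eps * 1) by (apply Rmult_le_compat_l; lra).
    assert (0 <= sqrt eps * (beta * dual_norm x0s)) by (apply Rmult_le_pos; auto; apply Rmult_le_pos; auto). nra.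
  - simpl. rewrite ga. simpl. apply Rabs_le. pose proof (abs_le _ _ wx0).
    assert (0 <= sqrt eps * (beta * Rabs (x0s x0))) by (apply Rmult_le_pos; [apply sqrt_pos|apply Rmult_le_pos; auto; apply Rabs_pos]).
    rewrite egx. simpl. split; lra.
  - rewrite vsub_sc. auto.
  - intro xs. rewrite (dual_diff X xs). eapply Rle_trans. apply dn_app.
    rewrite Rmult_comm. apply Rmult_le_compat_r. apply dn_nonneg. auto.
  - exists gx. split; auto. intro z. destruct (g z) as [c|] eqn:ez; simpl; auto.
    specialize (Hsd z). rewrite ez in Hsd. simpl in Hsd. lra.
  - rewrite vsub_sc. simpl. replace (1 * (1 * x0s (nadd xb (nscal (-1) x0)) + 1 * w (nadd xb (nscal (-1) x0))) + -1 * x0s (nadd xb (nscal (-1) x0))) with (w (nadd xb (nscal (-1) x0))) by ring.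
    apply Rabs_le. split; lra.
Qed.
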